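(* Let $G_1,G_2$ be induced subgraphs of a graph $G$ with $V(G)=V(G_1)\cup V(G_2)$ and $E(G)=E(G_1)\cup E(G_2)$, let $S$ be the subgraph induced by $V(G_1)\cap V(G_2)$, suppose $G-V(S)$ is disconnected and $S$ contains a nonedge $e=xy$. Suppose: (1) $G_2\cup e$ is an atom; (2) $G_1$ or $G_1\cup e$ is an atom; (3) $G_1-A$ is connected for every clique $A\subseteq V(S)$; (4) for every clique $A\subseteq V(S)$ with $x,y\notin A$, the vertices $x$ and $y$ lie in the same connected component of $G_2-A$. Then $G$ is an atom.
   Context: A clique is a set of pairwise adjacent vertices (possibly empty). A clique separator of a graph $H$ is a clique $U$ such that $H-U$ has at least two connected components. A graph is an atom if it is nonempty and has no clique separator. $H\cup e$ denotes $H$ with $e$ added as an edge. *)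

(* Defs.v *)
(* A graph is a relation [adj : rel T] on a finType T
   (symmetric and irreflexive for a simple graph); the graph on a vertex set
   [W : {set T}] is the subgraph of [adj] induced by W. *)
From mathcomp Require Import all_boot.
Set Implicit Arguments. Unset Strict Implicit. Unset Printing Implicit Defensive.

Definition induced_rel (T : finType) (adj : rel T) (W : {set T}) : rel T :=
  [rel a b | [&& a \in W, b \in W & adj a b]].

Definition same_comp (T : finType) (adj : rel T) (W : {set T}) (u v : T) : Prop :=
  u \in W /\ v \in W /\ connect (induced_rel adj W) u v.

Definition disconnected (T : finType) (adj : rel T) (W : {set T}) : Prop :=
  exists u v, u \in W /\ v \in W /\ ~ connect (induced_rel adj W) u v.

Definition connected_on (T : finType) (adj : rel T) (W : {set T}) : Prop :=
  forall u v, u \in W -> v \in W -> connect (induced_rel adj W) u v.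

Definition is_clique (T : finType) (adj : rel T) (U : {set T}) : Prop :=
  forall a b, a \in U -> b \in U -> a != b -> adj a b.

Definition clique_separator (T : finType) (adj : rel T) (W U : {set T}) : Prop :=
  U \subset W /\ is_clique adj U /\ disconnected adj (W :\: U).

Definition atom (T : finType) (adj : rel T) (W : {set T}) : Prop :=
  W != set0 /\ forall U : {set T}, ~ clique_separator adj W U.

Definition add_edge (T : finType) (adj : rel T) (x y : T) : rel T :=
  [rel a b | adj a b || ((a == x) && (b == y)) || ((a == y) && (b == x))].

(* Main.v *)
Require Import Defs.
From mathcomp Require Import all_boot.
Set Implicit Arguments. Unset Strict Implicit.

Section Helpers.
Variable T : finType.

Lemma ind_path_ind (r : rel T) (W : {set T}) (P : T -> T -> Prop) :
  (forall a, P a a) ->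
  (forall a c b, a \in W -> c \in W -> r a c -> connect (induced_rel r W) c b -> P c b -> P a b) ->
  forall a b, connect (induced_rel r W) a b -> P a b.
Proof.
move=> H0 HS a b /connectP [p Hp ->] {b}.
elim: p a Hp => [|c p IH] a /=; first by move=> _; apply: H0.
case/andP => /and3P [Ha Hc Hac] Hp.
apply: (HS a c) => //; last exact: IH.
by apply/connectP; exists p.
Qed.

Lemma conn_mono (r : rel T) (W W' : {set T}) a b :
  W \subset W' -> connect (induced_rel r W) a b -> connect (induced_rel r W') a b.
Proof.
move=> sW; move: a b; apply: ind_path_ind => // a c b Ha Hc Hac _ IH.
apply: connect_trans IH; apply: connect1.
by apply/and3P; split => //; apply: (subsetP sW).
Qed.

Lemma conn_end (r : rel T) (W : {set T}) a b :
  connect (induced_rel r W) a b -> a = b \/ b \in W.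
Proof.
move: a b; apply: ind_path_ind; first by left.
by move=> a c b _ Hc _ _ [<-|]; right.
Qed.

Lemma conn_add (adj : rel T) x y (W : {set T}) a b :
  connect (induced_rel (add_edge adj x y) W) a b ->
  connect (induced_rel adj W) a b \/ connect (induced_rel adj W) a x \/
  connect (induced_rel adj W) a y.
Proof.
move: a b; apply: ind_path_ind; first by move=> a; left.
move=> a c b Ha Hc /= /orP [/orP [Hac|/andP [/eqP -> _]]|/andP [/eqP -> _]] _ IH.
- have E : connect (induced_rel adj W) a c by by apply: connect1; apply/and3P.
  by case: IH => [H|[H|H]]; [left|right;left|right;right]; apply: connect_trans E H.
- by right; left.
- by right; right.
Qed.

Lemma atom_conn (r : rel T) (W U : {set T}) :
  atom r W -> U \subset W -> is_clique r U ->
  forall a b, a \in W :\: U -> b \in W :\: U -> connect (induced_rel r (W :\: U)) a b.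
Proof.
move=> [_ HA] sU cU a b Ha Hb.
case: (boolP (connect _ a b)) => // Hn; exfalso.
apply: (HA U); split => //; split => //.
by exists a, b; split => //; split => //; apply/negP.
Qed.

Lemma clique_add (adj : rel T) x y (U : {set T}) :
  is_clique adj U -> is_clique (add_edge adj x y) U.
Proof. by move=> cU a b Ha Hb Hab; apply/orP; left; apply/orP; left; apply: cU. Qed.

Lemma clique_sub (r : rel T) (U U' : {set T}) :
  U' \subset U -> is_clique r U -> is_clique r U'.
Proof. by move=> s cU a b Ha Hb; apply: cU; apply: (subsetP s). Qed.

End Helpers.

Theorem mainTheorem18 (T : finType) (adj : rel T)
  (adj_sym : symmetric adj) (adj_irr : irreflexive adj)
  (V1 V2 : {set T}) (x y : T) :
  (* V(G) = V(G1) ∪ V(G2), G1 = G[V1], G2 = G[V2] *)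
  V1 :|: V2 = [set: T] ->
  (* E(G) = E(G1) ∪ E(G2) *)
  (forall u v, adj u v -> (u \in V1) && (v \in V1) || (u \in V2) && (v \in V2)) ->
  (* G - V(S) is disconnected, where V(S) = V1 ∩ V2 *)
  disconnected adj (~: (V1 :&: V2)) ->
  (* e = xy is a nonedge of S *)
  x \in V1 :&: V2 -> y \in V1 :&: V2 -> x != y -> ~~ adj x y ->
  (* (1) *) atom (add_edge adj x y) V2 ->
  (* (2) *) (atom adj V1 \/ atom (add_edge adj x y) V1) ->
  (* (3) *) (forall A : {set T}, A \subset V1 :&: V2 -> is_clique adj A ->
               connected_on adj (V1 :\: A)) ->
  (* (4) *) (forall A : {set T}, A \subset V1 :&: V2 -> is_clique adj A ->
               x \notin A -> y \notin A -> same_comp adj (V2 :\: A) x y) ->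
  atom adj [set: T].
Proof.
move=> HU HE _ Hx Hy Hxy Hnxy H1 H2 H3 H4.
move: Hx Hy; rewrite !inE => /andP [x1 x2] /andP [y1 y2].
split; first by apply/set0Pn; exists x; rewrite inE.
move=> U [_ [cU [u [v [Hu [Hv Huv]]]]]]; apply: Huv.
set G := induced_rel adj (setT :\: U).
have symG : connect_sym G.
  apply: sym_connect_sym => a b.
  by apply/idP/idP => /and3P [? ? H]; apply/and3P; split => //; rewrite adj_sym.
have mono1 : forall (W : {set T}) (a b : T), W \subset V1 \/ W \subset V2 ->
    connect (induced_rel adj (W :\: U)) a b -> connect G a b.
  move=> W a b _; apply: conn_mono; apply/subsetP => z; rewrite !inE.
  by case/andP => ->.
have notxy : ~ (x \in U /\ y \in U).
  case=> xU yU; move/negP: Hnxy; apply; exact: cU.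
have HUV : U \subset V1 \/ U \subset V2.
  case: (boolP (U \subset V1)) => [|/subsetPn [a aU aV1]]; first by left.
  right; apply/subsetP => b bU; case: (boolP (b \in V2)) => // bV2.
  have aV2 : a \in V2 by move: (in_setT a); rewrite -HU inE (negbTE aV1) /=.
  have bV1 : b \in V1 by move: (in_setT b); rewrite -HU inE (negbTE bV2) orbF.
  have ab : a != b by apply/eqP => E; move: aV1; rewrite E bV1.
  by move: (HE _ _ (cU _ _ aU bU ab)); rewrite (negbTE aV1) (negbTE bV2) andbF.
pose z := if x \in U then y else x.
have zU : z \notin U.
  rewrite /z; case: ifP => xU; last by rewrite xU.
  by apply/negP => yU; apply: notxy.
have z1 : z \in V1 by rewrite /z; case: ifP.
have z2 : z \in V2 by rewrite /z; case: ifP.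
have reach : forall (W : {set T}) (w : T), W \subset V1 \/ W \subset V2 ->
   (x \notin U -> y \notin U -> connect G x y) ->
   w \notin U ->
   connect (induced_rel adj (W :\: U)) w z \/ connect (induced_rel adj (W :\: U)) w x \/
   connect (induced_rel adj (W :\: U)) w y -> connect G w z.
  move=> W w sW Hxy' wU [H|[H|H]].
  - exact: mono1 H.
  - have Hw := mono1 _ _ _ sW H.
    case: (conn_end H) => [E|].
      by rewrite /z -E (negbTE wU).
    by rewrite !inE => /andP [xU _]; rewrite /z (negbTE xU).
  - have Hw := mono1 _ _ _ sW H.
    case: (conn_end H) => [E|].
      rewrite /z E; case: ifP => xU //.
      rewrite symG; apply: Hxy'; [by rewrite xU | by rewrite -E].
    rewrite !inE => /andP [yU _]; rewrite /z; case: ifP => // xU.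
    apply: connect_trans Hw _; rewrite symG; apply: Hxy' => //; by rewrite xU.
have main : forall w, w \notin U -> connect G w z.
  case: HUV => sU.
  -
    have eqV2 : V2 :\: (U :&: V2) = V2 :\: U.
      by apply/setP => a; rewrite !inE; case: (a \in U); case: (a \in V2).
    have sA : U :&: V2 \subset V1 :&: V2 by apply: setSI.
    have cA : is_clique adj (U :&: V2) by apply: clique_sub (subsetIl _ _) cU.
    have Hxy' : x \notin U -> y \notin U -> connect G x y.
      move=> xU yU.
      have xA : x \notin U :&: V2 by rewrite inE (negbTE xU).
      have yA : y \notin U :&: V2 by rewrite inE (negbTE yU).
      have [_ [_ H]] := H4 _ sA cA xA yA.
      rewrite eqV2 in H; exact: (mono1 V2 _ _ (or_intror (subxx _)) H).
    have c2 : forall w, w \in V2 -> w \notin U -> connect G w z.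
      move=> w w2 wU; apply: (reach V2) => //; first by right.
      apply: conn_add; rewrite -eqV2.
      apply: atom_conn => //; first exact: subsetIr.
        exact: clique_add.
      by rewrite eqV2 !inE w2 wU. by rewrite eqV2 !inE z2 zU.
    have c1 : forall w, w \in V1 -> w \notin U -> connect G w z.
      move=> w w1 wU; case: H2 => H2.
        apply: (mono1 V1); first by left.
        by apply: atom_conn => //; rewrite !inE ?w1 ?wU ?z1 ?zU.
      apply: (reach V1) => //; first by left.
      apply: conn_add; apply: atom_conn => //; first exact: clique_add.
        by rewrite !inE w1 wU. by rewrite !inE z1 zU.
    move=> w wU; move: (in_setT w); rewrite -HU inE => /orP [w1|w2].
      exact: c1. exact: c2.
  -
    have eqV1 : V1 :\: (U :&: V1) = V1 :\: U.
      by apply/setP => a; rewrite !inE; case: (a \in U); case: (a \in V1).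
    have sA : U :&: V1 \subset V1 :&: V2.
      by rewrite setIC; apply: setIS.
    have cA : is_clique adj (U :&: V1) by apply: clique_sub (subsetIl _ _) cU.
    have c1 : forall w, w \in V1 -> w \notin U -> connect G w z.
      move=> w w1 wU; apply: (mono1 V1); first by left.
      rewrite -eqV1; apply: H3 => //; by rewrite !inE ?w1 ?(negbTE wU) ?z1 ?(negbTE zU).
    have Hxy' : x \notin U -> y \notin U -> connect G x y.
      move=> xU yU; apply: (mono1 V1); first by left.
      rewrite -eqV1; apply: H3 => //; by rewrite !inE ?x1 ?(negbTE xU) ?y1 ?(negbTE yU).
    have c2 : forall w, w \in V2 -> w \notin U -> connect G w z.
      move=> w w2 wU; apply: (reach V2) => //; first by right.
      apply: conn_add; apply: atom_conn => //; first exact: clique_add.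
        by rewrite !inE w2 wU. by rewrite !inE z2 zU.
    move=> w wU; move: (in_setT w); rewrite -HU inE => /orP [w1|w2].
      exact: c1. exact: c2.
move: Hu Hv; rewrite !inE => /andP [uU _] /andP [vU _].
apply: connect_trans (main _ uU) _; rewrite symG; exact: main.
Qed.
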